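(* (Monogamy of entanglement and local contextuality.) Fix a noncontextuality inequality (data $N$, ${\cal E}_n$, $x_n$ as in the context) and a dimension $d_0$. Let A be a $d_0$-level system, B any finite-dimensional system, and $\rho$ any state of AB with $\rho_\mathrm{A}=\operatorname{tr}_\mathrm{B}\rho$. Define $$E(\rho)\equiv\inf_{\{P_m,|\Psi_m\rangle\}}\sum_mP_m\Big(C^{max}_{d_0}-C_{d_0}\big(\operatorname{tr}_\mathrm{B}|\Psi_m\rangle\langle\Psi_m|\big)\Big),$$ the infimum being over all ensembles of probabilities $P_m$ and pure states $|\Psi_m\rangle$ of AB with $\sum_mP_m|\Psi_m\rangle\langle\Psi_m|=\rho$. Then $$E(\rho)+C_{d_0}(\rho_\mathrm{A})\le C^{max}_{d_0}.$$
   Context: A noncontextuality inequality is specified by an integer $N$, a finite family of subsets ${\cal E}_n\subseteq\{1,\dots,N\}$ and real coefficients $x_n$ such that $\max_{a\in\{\pm1\}^N}\sum_nx_n\prod_{k\in{\cal E}_n}a_k=1$. For a dimension $d$, ${\cal A}_d$ is the set of tuples $(A_1,\dots,A_N)$ of Hermitian operators on $\mathbb C^d$ with $A_k^2=I$ such that $[A_k,A_l]=0$ whenever $k,l$ belong to a common ${\cal E}_n$. For a density matrix $\omega$ on $\mathbb C^d$, $C_d(\omega)=\sup_{(A_k)\in{\cal A}_d}\operatorname{tr}\big(\omega\sum_nx_n\prod_{k\in{\cal E}_n}A_k\big)$, and $C^{max}_d$ is the supremum of $C_d$ over all density matrices on $\mathbb C^d$. (The function $E$ is the convex-roof entanglement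 monotone built from the entropies $S^{lc}_d$; on systems with $\dim A=d_0$ it takes the form given in the claim.) *)

(* Defs.v *)
From HB Require Import structures.
From mathcomp Require Import all_boot all_order all_algebra.
From mathcomp Require Import complex mxtens.
From mathcomp Require Import boolp classical_sets reals.
Set Implicit Arguments.
Unset Strict Implicit.
Unset Printing Implicit Defensive.
Import GRing.Theory Num.Theory.
Local Open Scope ring_scope.

Section QContext.
Variable R : realType.
Local Notation C := (R[i]).

Definition adjmx m n (A : 'M[C]_(m, n)) : 'M[C]_(n, m) := map_mx (@conjc R) A^T.

Definition hermitian d (A : 'M[C]_d) : Prop := adjmx A = A.

Definition psd d (A : 'M[C]_d) : Prop :=
  forall v : 'cV[C]_d, let z := (adjmx v *m A *m v) 0 0 in
    complex.Im z = 0 /\ 0 <= complex.Re z.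

Definition density d (A : 'M[C]_d) : Prop :=
  hermitian A /\ psd A /\ \tr A = 1.

Variables (N K : nat) (Es : 'I_K -> {set 'I_N}) (xs : 'I_K -> R).

Definition nc_value (a : 'I_N -> R) : R :=
  \sum_(n < K) xs n * \prod_(k in Es n) a k.

Definition pm1 (a : 'I_N -> R) : Prop := forall k, a k = 1 \/ a k = -1.

Definition nc_normalized : Prop :=
  (forall a, pm1 a -> nc_value a <= 1) /\ (exists2 a, pm1 a & nc_value a = 1).

Definition admissible d (A : 'I_N -> 'M[C]_d) : Prop :=
  (forall k, hermitian (A k) /\ A k *m A k = 1%:M) /\
  (forall n k l, k \in Es n -> l \in Es n -> A k *m A l = A l *m A k).

Definition nc_operator d (A : 'I_N -> 'M[C]_d) : 'M[C]_d :=
  \sum_(n < K) real_complex R (xs n) *: \big[@mulmx C d d d / 1%:M]_(k in Es n) A k.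

Definition Cval d (w : 'M[C]_d) : R :=
  sup [set r : R | exists A : 'I_N -> 'M[C]_d,
         admissible A /\ r = complex.Re (\tr (w *m nc_operator A))].

Definition Cmax d : R :=
  sup [set r : R | exists w : 'M[C]_d, density w /\ r = Cval w].

Definition ptraceB d0 dB (rho : 'M[C]_(d0 * dB)) : 'M[C]_d0 :=
  \matrix_(i, j) \sum_(k < dB) rho (mxtens_index (i, k)) (mxtens_index (j, k)).

Definition pure_ensemble D (rho : 'M[C]_D) M (P : 'I_M -> R) (psi : 'I_M -> 'cV[C]_D)
  : Prop :=
  (forall m, 0 <= P m) /\ \sum_(m < M) P m = 1 /\
  (forall m, adjmx (psi m) *m psi m = 1%:M) /\
  \sum_(m < M) real_complex R (P m) *: (psi m *m adjmx (psi m)) = rho.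

Definition Eroof d0 dB (rho : 'M[C]_(d0 * dB)) : R :=
  inf [set r : R | exists M (P : 'I_M -> R) (psi : 'I_M -> 'cV[C]_(d0 * dB)),
         pure_ensemble rho P psi /\
         r = \sum_(m < M) P m *
               (Cmax d0 - Cval (@ptraceB d0 dB (psi m *m adjmx (psi m))))].

End QContext.

Arguments ptraceB {R} d0 dB rho.
Arguments Eroof {R N K} Es xs d0 dB rho.
Arguments Cmax {R N K} Es xs d.
Arguments Cval {R N K} Es xs {d} w.

(* Main.v *)
Require Import Defs.
From HB Require Import structures.
From mathcomp Require Import all_boot all_order all_algebra.
From mathcomp Require Import complex mxtens.
From mathcomp Require Import boolp classical_sets reals.
From mathcomp Require Import ring lra.
Import Order.TTheory GRing.Theory Num.Theory.
Set Implicit Arguments.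
Unset Strict Implicit.
Local Open Scope classical_set_scope.
Local Open Scope ring_scope.

Section H.
Variable R : realType.
Local Notation C := (R[i]).
Lemma ReD (x y : C) : complex.Re (x + y) = complex.Re x + complex.Re y.
Proof. by case: x; case: y. Qed.
Lemma ImD (x y : C) : complex.Im (x + y) = complex.Im x + complex.Im y.
Proof. by case: x; case: y. Qed.
Lemma ReM (x y : C) : complex.Re (x * y) = complex.Re x * complex.Re y - complex.Im x * complex.Im y.
Proof. by case: x => a b; case: y => c d. Qed.
Lemma ImM (x y : C) : complex.Im (x * y) = complex.Re x * complex.Im y + complex.Im x * complex.Re y.
Proof. by case: x => a b; case: y => c d. Qed.
Lemma Re_sum I (r : seq I) (P : pred I) (F : I -> C) :
  complex.Re (\sum_(i <- r | P i) F i) = \sum_(i <- r | P i) complex.Re (F i).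
Proof. exact: (big_morph _ ReD). Qed.
Lemma Im_sum I (r : seq I) (P : pred I) (F : I -> C) :
  complex.Im (\sum_(i <- r | P i) F i) = \sum_(i <- r | P i) complex.Im (F i).
Proof. exact: (big_morph _ ImD). Qed.
Lemma Re_conj (x : C) : complex.Re (conjc x) = complex.Re x. Proof. by case: x. Qed.
Lemma Im_conj (x : C) : complex.Im (conjc x) = - complex.Im x. Proof. by case: x. Qed.
Lemma Re_real (x : R) : complex.Re (real_complex R x) = x. Proof. by []. Qed.
Lemma Im_real (x : R) : complex.Im (real_complex R x) = 0. Proof. by []. Qed.

Lemma quadE d (w : 'M[C]_d) (v : 'cV[C]_d) :
  (adjmx v *m w *m v) 0 0 = \sum_a \sum_b conjc (v a 0) * w a b * v b 0.
Proof.
rewrite mxE exchange_big /=; apply: eq_bigr => b _.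
rewrite mxE mulr_suml; apply: eq_bigr => a _.
by rewrite !mxE.
Qed.

Lemma adjmxM m n p (A : 'M[C]_(m, n)) (B : 'M[C]_(n, p)) :
  adjmx (A *m B) = adjmx B *m adjmx A.
Proof. by rewrite /adjmx trmx_mul map_mxM. Qed.

Lemma adjmx1 d : adjmx (1%:M : 'M[C]_d) = 1%:M.
Proof. by rewrite /adjmx trmx1 map_mx1. Qed.

Definition unitaryC {d} (U : 'M[C]_d) := adjmx U *m U = 1%:M.

Lemma unitary_entry d (U : 'M[C]_d) (a b : 'I_d) : unitaryC U ->
  complex.Re (U a b) ^+ 2 + complex.Im (U a b) ^+ 2 <= 1.
Proof.
move=> HU.
have : complex.Re ((adjmx U *m U) b b) = 1 by rewrite HU mxE eqxx.
rewrite mxE Re_sum => <-.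
rewrite (bigD1 a) //= !mxE ReM Re_conj Im_conj.
rewrite -[X in X <= _]addr0 lerD ?sqrrN //; first by rewrite !expr2; lra.
apply: sumr_ge0 => i _; rewrite !mxE ReM Re_conj Im_conj.
have := sqr_ge0 (complex.Re (U i b)); have := sqr_ge0 (complex.Im (U i b)).
rewrite !expr2; lra.
Qed.
Lemma bound_aux (a b x y : R) : x ^+ 2 + y ^+ 2 <= 1 ->
  `|a * x - b * y| <= `|a| + `|b|.
Proof.
move=> h.
have hx1 : x <= 1 by rewrite !expr2 in h; nra.
have hx2 : -1 <= x by rewrite !expr2 in h; nra.
have hy1 : y <= 1 by rewrite !expr2 in h; nra.
have hy2 : -1 <= y by rewrite !expr2 in h; nra.
rewrite ler_norml; have [ha|ha] := lerP 0 a; have [hb|hb] := lerP 0 b;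
  rewrite ?(ger0_norm ha) ?(ltr0_norm ha) ?(ger0_norm hb) ?(ltr0_norm hb);
  apply/andP; split; nra.
Qed.

Definition Tw {d} (w : 'M[C]_d) : R :=
  \sum_a \sum_b (`|complex.Re (w a b)| + `|complex.Im (w a b)|).

Lemma tr_unitary_bound d (w U : 'M[C]_d) : unitaryC U ->
  `|complex.Re (\tr (w *m U))| <= Tw w.
Proof.
move=> HU; rewrite /mxtrace Re_sum.
apply: (le_trans (ler_norm_sum _ _ _)); apply: ler_sum => a _.
rewrite mxE Re_sum.
apply: (le_trans (ler_norm_sum _ _ _)); apply: ler_sum => b _.
rewrite ReM; apply: bound_aux; exact: unitary_entry.
Qed.

Lemma unitary1 d : @unitaryC d 1%:M.
Proof. by rewrite /unitaryC adjmx1 mul1mx. Qed.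

Lemma unitaryM d (U V : 'M[C]_d) : unitaryC U -> unitaryC V -> unitaryC (U *m V).
Proof.
rewrite /unitaryC adjmxM => hU hV.
by rewrite mulmxA -(mulmxA (adjmx V)) hU mulmx1 hV.
Qed.
Variables (N K : nat) (Es : 'I_K -> {set 'I_N}) (xs : 'I_K -> R).

Definition prodA {d} (A : 'I_N -> 'M[C]_d) n :=
  \big[@mulmx C d d d / 1%:M]_(k in Es n) A k.

Lemma adm_unitary d (A : 'I_N -> 'M[C]_d) n : admissible Es A -> unitaryC (prodA A n).
Proof.
move=> [HA _]; rewrite /prodA; apply: (big_ind (fun M => unitaryC M)).
- exact: unitary1.
- exact: unitaryM.
move=> k _; have [Hh Hs] := HA k; by rewrite /unitaryC Hh.
Qed.

Lemma tr_sum d I (r : seq I) (P : pred I) (F : I -> 'M[C]_d) :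
  \tr (\sum_(i <- r | P i) F i) = \sum_(i <- r | P i) \tr (F i).
Proof. exact: (big_morph _ (@mxtraceD _ _) (mxtrace0 _ _)). Qed.
Lemma Re_tr_op d (w : 'M[C]_d) (A : 'I_N -> 'M[C]_d) :
  complex.Re (\tr (w *m nc_operator Es xs A)) =
  \sum_n xs n * complex.Re (\tr (w *m prodA A n)).
Proof.
rewrite /nc_operator mulmx_sumr tr_sum Re_sum; apply: eq_bigr => n _.
by rewrite -scalemxAr mxtraceZ ReM Re_real Im_real mul0r subr0.
Qed.

Definition Bd {d} (w : 'M[C]_d) := (\sum_n `|xs n|) * Tw w.

Lemma Re_tr_bound d (w : 'M[C]_d) (A : 'I_N -> 'M[C]_d) : admissible Es A ->
  complex.Re (\tr (w *m nc_operator Es xs A)) <= Bd w.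
Proof.
move=> HA; rewrite Re_tr_op /Bd mulr_suml; apply: ler_sum => n _.
apply: (le_trans (ler_norm _)); rewrite normrM.
apply: ler_wpM2l => //; apply: tr_unitary_bound; exact: adm_unitary.
Qed.

Lemma adm1 d : admissible Es (fun _ => (1%:M : 'M[C]_d)).
Proof.
split=> [k|n k l _ _]; last by [].
by split; [exact: adjmx1 | rewrite mul1mx].
Qed.

Definition Cset {d} (w : 'M[C]_d) := [set r : R | exists A : 'I_N -> 'M[C]_d,
         admissible Es A /\ r = complex.Re (\tr (w *m nc_operator Es xs A))].

Lemma Cset_ne d (w : 'M[C]_d) : Cset w !=set0.
Proof. by exists (complex.Re (\tr (w *m nc_operator Es xs (fun _ => 1%:M)))), (fun _ => 1%:M); split => //; exact: adm1. Qed.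

Lemma Cset_ub d (w : 'M[C]_d) : ubound (Cset w) (Bd w).
Proof. by move=> r [A [HA ->]]; exact: Re_tr_bound. Qed.

Lemma Cval_ge d (w : 'M[C]_d) (A : 'I_N -> 'M[C]_d) : admissible Es A ->
  complex.Re (\tr (w *m nc_operator Es xs A)) <= Cval Es xs w.
Proof.
move=> HA; apply: (ub_le_sup (E := Cset w)); first by exists (Bd w); exact: Cset_ub.
by exists A.
Qed.

Lemma Cval_le d (w : 'M[C]_d) : Cval Es xs w <= Bd w.
Proof. apply: ge_sup; [exact: Cset_ne | exact: Cset_ub]. Qed.
Lemma sum_delta d (G : 'I_d -> C) (a : 'I_d) : \sum_q G q * (q == a)%:R = G a.
Proof.
rewrite (bigD1 a) //= eqxx mulr1 big1 ?addr0 // => q /negbTE ->; exact: mulr0.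
Qed.

Lemma sum2 d (G : 'I_d -> C) (a b : 'I_d) al be :
  \sum_q G q * ((q == a)%:R * al + (q == b)%:R * be) = G a * al + G b * be.
Proof.
rewrite -(sum_delta (fun q => G q * al)) -(sum_delta (fun q => G q * be)) -big_split.
by apply: eq_bigr => q _ /=; ring.
Qed.

Lemma quad2 d (w : 'M[C]_d) (a b : 'I_d) al be :
  let v := \col_p ((p == a)%:R * al + (p == b)%:R * be) in
  (adjmx v *m w *m v) 0 0 =
  conjc al * (w a a * al + w a b * be) + conjc be * (w b a * al + w b b * be).
Proof.
rewrite /= quadE.
under eq_bigr => p _ do (under eq_bigr => q _ do rewrite !mxE -mulrA); rewrite /=.
under eq_bigr => p _ do rewrite -mulr_sumr sum2.
rewrite (eq_bigr (fun p => (w p a * al + w p b * be) *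
   ((p == a)%:R * conjc al + (p == b)%:R * conjc be))); last first.
  move=> p _; rewrite rmorphD !rmorphM /= !conjc_nat; ring.
rewrite sum2; ring.
Qed.

Lemma herm_entry d (w : 'M[C]_d) a b : Defs.hermitian w -> w b a = conjc (w a b).
Proof. by move=> H; rewrite -{1}H !mxE. Qed.

Lemma psd_pair d (w : 'M[C]_d) a b sr si : Defs.hermitian w -> psd w ->
  0 <= complex.Re (w a a) + (sr ^+ 2 + si ^+ 2) * complex.Re (w b b)
       + 2 * (sr * complex.Re (w a b) - si * complex.Im (w a b)).
Proof.
move=> Hh Hp.
have [_ H] := Hp (\col_p ((p == a)%:R * (Complex 1 0) + (p == b)%:R * (Complex sr si))).
move: H; rewrite quad2 (herm_entry a b Hh).
rewrite !(ReD, ReM, ImM, ImD, Re_conj, Im_conj) /=.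
move=> H; apply: (le_trans H); rewrite le_eqVlt; apply/orP; left; apply/eqP.
ring.
Qed.
Lemma entry_bound d (w : 'M[C]_d) a b : density w ->
  `|complex.Re (w a b)| + `|complex.Im (w a b)| <= complex.Re (w a a) + complex.Re (w b b).
Proof.
move=> [Hh [Hp _]].
have h1 := psd_pair a b 1 0 Hh Hp.
have h2 := psd_pair a b (-1) 0 Hh Hp.
have h3 := psd_pair a b 0 1 Hh Hp.
have h4 := psd_pair a b 0 (-1) Hh Hp.
rewrite ?expr0n ?expr1n ?sqrrN ?expr1n /= in h1 h2 h3 h4.
set x := complex.Re (w a b) in h1 h2 h3 h4 *.
set y := complex.Im (w a b) in h1 h2 h3 h4 *.
have [hx|hx] := lerP 0 x; have [hy|hy] := lerP 0 y;
  rewrite ?(ger0_norm hx) ?(ltr0_norm hx) ?(ger0_norm hy) ?(ltr0_norm hy); lra.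
Qed.

Lemma Tw_density d (w : 'M[C]_d) : density w -> Tw w <= d%:R + d%:R.
Proof.
move=> Hd; rewrite /Tw.
apply: (le_trans (y := \sum_a \sum_b (complex.Re (w a a) + complex.Re (w b b)))).
  by apply: ler_sum => a _; apply: ler_sum => b _; exact: entry_bound.
have htr : \sum_a complex.Re (w a a) = 1.
  by have [_ [_ Ht]] := Hd; rewrite -Re_sum; move: Ht; rewrite /mxtrace => ->.
rewrite (eq_bigr (fun a => complex.Re (w a a) *+ d + 1)); last first.
  move=> a _; rewrite big_split /= sumr_const card_ord htr //.
rewrite big_split /= sumrMnl htr sumr_const card_ord.
by rewrite -[X in X + _]mulr_natl mulr1 -[X in _ + X]mulr_natl mulr1.
Qed.

Definition Kd d := (\sum_n `|xs n|) * (d%:R + d%:R).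

Lemma Bd_density d (w : 'M[C]_d) : density w -> Bd w <= Kd d.
Proof. move=> Hd; apply: ler_wpM2l; [exact: sumr_ge0 | exact: Tw_density]. Qed.

Lemma Cval_le_Cmax d (w : 'M[C]_d) : density w -> Cval Es xs w <= Cmax Es xs d.
Proof.
move=> Hd; apply: (ub_le_sup (E := [set r : R | exists w : 'M[C]_d, density w /\ r = Cval Es xs w])).
  by exists (Kd d) => r [w' [Hw' ->]]; apply: le_trans (Cval_le _) (Bd_density Hw').
by exists w.
Qed.
Lemma sum_tens m n (F : 'I_(m * n) -> C) :
  \sum_p F p = \sum_(i < m) \sum_(k < n) F (mxtens_index (i, k)).
Proof.
rewrite pair_big /= (reindex (@mxtens_index m n)) /=; last first.
  by exists (@mxtens_unindex m n) => x _; [apply: mxtens_indexK | apply: mxtens_unindexK].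
by apply: eq_bigr => -[i k].
Qed.

Lemma ptrace_herm d0 dB (rho : 'M[C]_(d0 * dB)) : Defs.hermitian rho ->
  Defs.hermitian (ptraceB d0 dB rho).
Proof.
move=> H; apply/matrixP => i j; rewrite !mxE rmorph_sum; apply: eq_bigr => k _.
rewrite (herm_entry (mxtens_index (i, k)) (mxtens_index (j, k)) H).
exact: conjcK.
Qed.

Lemma ptrace_tr d0 dB (rho : 'M[C]_(d0 * dB)) : \tr (ptraceB d0 dB rho) = \tr rho.
Proof.
rewrite /mxtrace [RHS]sum_tens; apply: eq_bigr => i _; by rewrite mxE.
Qed.
Definition uvec d0 dB (v : 'cV[C]_d0) (k : 'I_dB) : 'cV[C]_(d0 * dB) :=
  \col_p (((mxtens_unindex p).2 == k)%:R * v (mxtens_unindex p).1 0).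

Lemma uvecE d0 dB (v : 'cV[C]_d0) (k : 'I_dB) a k1 :
  uvec v k (mxtens_index (a, k1)) 0 = (k1 == k)%:R * v a 0.
Proof. by rewrite /uvec mxE mxtens_indexK. Qed.

Lemma quad_u d0 dB (rho : 'M[C]_(d0 * dB)) (v : 'cV[C]_d0) (k : 'I_dB) :
  (adjmx (uvec v k) *m rho *m uvec v k) 0 0 =
  \sum_a \sum_b conjc (v a 0) * rho (mxtens_index (a, k)) (mxtens_index (b, k)) * v b 0.
Proof.
rewrite quadE sum_tens; apply: eq_bigr => a _.
rewrite (bigD1 k) //= [X in _ + X]big1 ?addr0; last first.
  move=> k1 /negbTE hk1; apply: big1 => q _.
  by rewrite uvecE hk1 mul0r rmorph0 !mul0r.
rewrite sum_tens; apply: eq_bigr => b _.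
rewrite (bigD1 k) //= [X in _ + X]big1 ?addr0; last first.
  by move=> k1 /negbTE hk1; rewrite (uvecE v k b k1) hk1 mul0r mulr0.
by rewrite !uvecE eqxx !mul1r.
Qed.

Lemma ptrace_quad d0 dB (rho : 'M[C]_(d0 * dB)) (v : 'cV[C]_d0) :
  (adjmx v *m ptraceB d0 dB rho *m v) 0 0 =
  \sum_k (adjmx (uvec v k) *m rho *m uvec v k) 0 0.
Proof.
rewrite (eq_bigr _ (fun k _ => quad_u rho v k)).
rewrite quadE [RHS]exchange_big /=; apply: eq_bigr => a _.
rewrite [RHS]exchange_big /=; apply: eq_bigr => b _.
by rewrite mxE mulr_sumr mulr_suml.
Qed.

Lemma ptrace_psd d0 dB (rho : 'M[C]_(d0 * dB)) : psd rho -> psd (ptraceB d0 dB rho).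
Proof.
move=> H v /=; rewrite ptrace_quad Re_sum Im_sum; split.
  by apply: big1 => k _; have [] := H (uvec v k).
by apply: sumr_ge0 => k _; have [] := H (uvec v k).
Qed.

Lemma ptrace_density d0 dB (rho : 'M[C]_(d0 * dB)) : density rho -> density (ptraceB d0 dB rho).
Proof.
move=> [Hh [Hp Ht]]; split; first exact: ptrace_herm.
by split; [exact: ptrace_psd | rewrite ptrace_tr].
Qed.
Lemma ptrace_lin d0 dB M (c : 'I_M -> C) (X : 'I_M -> 'M[C]_(d0 * dB)) :
  ptraceB d0 dB (\sum_m c m *: X m) = \sum_m c m *: ptraceB d0 dB (X m).
Proof.
apply/matrixP => i j; rewrite mxE summxE.
under eq_bigr => k _ do rewrite summxE.
rewrite exchange_big; apply: eq_bigr => m _.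
rewrite !mxE mulr_sumr; apply: eq_bigr => k _; by rewrite mxE.
Qed.

Lemma Re_tr_ens d M (P : 'I_M -> R) (Y : 'I_M -> 'M[C]_d) (Op : 'M[C]_d) :
  complex.Re (\tr ((\sum_m real_complex R (P m) *: Y m) *m Op)) =
  \sum_m P m * complex.Re (\tr (Y m *m Op)).
Proof.
rewrite mulmx_suml tr_sum Re_sum; apply: eq_bigr => m _.
by rewrite -scalemxAl mxtraceZ ReM Re_real Im_real mul0r subr0.
Qed.
End H.

Unset Implicit Arguments.
Set Strict Implicit.

Theorem mainTheorem5 (R : realType) (N K : nat) (Es : 'I_K -> {set 'I_N})
  (xs : 'I_K -> R) (Hnc : nc_normalized Es xs) (d0 dB : nat)
  (rho : 'M[R[i]]_(d0 * dB)) (Hrho : density rho) :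
  Eroof Es xs d0 dB rho + Cval Es xs (ptraceB d0 dB rho) <= Cmax Es xs d0.
Proof.
set rA := ptraceB d0 dB rho.
have hA : Cval Es xs rA <= Cmax Es xs d0 by apply: Cval_le_Cmax; exact: ptrace_density.
set U := Cmax Es xs d0 - Cval Es xs rA.
rewrite /Eroof.
set S := [set r : R | _].
have hS : forall r, S r -> r <= U.
  move=> r [M [P [psi [[HP0 [HP1 [Hn Hsum]]] ->]]]].
  set sig := fun m => ptraceB d0 dB (psi m *m adjmx (psi m)).
  have hconv : Cval Es xs rA <= \sum_m P m * Cval Es xs (sig m).
    apply: ge_sup; first exact: Cset_ne.
    move=> r' [A [HA ->]].
    rewrite /rA -Hsum ptrace_lin Re_tr_ens; apply: ler_sum => m _.
    apply: ler_wpM2l; first exact: HP0.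
    exact: Cval_ge.
  rewrite (eq_bigr (fun m => P m * Cmax Es xs d0 - P m * Cval Es xs (sig m))); last first.
    by move=> m _; rewrite mulrBr.
  rewrite sumrB -mulr_suml HP1 mul1r /U.
  lra.
have [hi|hi] := pselect (has_inf S).
  case: hi => [[r Sr] hl].
  have := ge_inf hl Sr; have := hS r Sr; rewrite /U; lra.
rewrite inf_out //; rewrite /U in hA *; lra.
Qed.
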